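(* Assume BMIP has a finite optimal solution. Let $Q=2^J$ and let $\mathbf t^{k,1},\dots,\mathbf t^{k,Q}$ enumerate all vectors in $\{0,1\}^J$. Then BMIP1 is equivalent (same optimal value and same optimal values of the variables $(\mathbf p,\mathbf p^s,\mathbf z,\mathbf x',\mathbf q',\mathbf y',\mathbf t')$) to the single-level problem $$\textbf{BMIPe}:\ \max\ \mathcal P(\mathbf p,\mathbf p^s,\mathbf z,\mathbf y',\mathbf t')$$ over $(\mathbf p,\mathbf p^s,\mathbf z,\mathbf x',\mathbf q',\mathbf y',\mathbf t')$ and dual variables $\mu_1^{k,l},\mu_2^{k,l},\nu_j^{k,l},\Gamma_j^{k,l},\sigma_j^{k,l},\xi_i^{k,l},\tau_{i,j}^{k,l}\ge0$, $\eta_i^{k,l}\in\mathbb R$ ($k\in\mathcal K$, $1\le l\le Q$), subject to $(\mathbf p,\mathbf p^s,\mathbf z,\mathbf x',\mathbf q',\mathbf y',\mathbf t')\in\mathcal H$, $(\mathbf x'^k,\mathbf q'^k,\mathbf y'^k,\mathbf t'^k)\in\mathcal S^k(\mathbf p,\mathbf p^s,\mathbf z)$ for all $k$, and, for all $k$ and all $1\le l\le Q$: $$p_0(1+\mu_1^{k,l})-\mu_2^{k,l}\ge0;\quad p_j\mu_1^{k,l}-\Gamma_j^{k,l}+\sigma_j^{k,l}+p_j\ge0\ \forall j;$$ $$\mu_2^{k,l}+d_{i,0}\xi_i^{k,l}-\eta_i^{k,l}\ge-w^kd_{i,0}\ \forall i;\quad \eta_i^{k,l}\le\psi_i^k\ \forall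 i;\quad \Gamma_j^{k,l}+d_{i,j}\xi_i^{k,l}+\tau_{i,j}^{k,l}-\eta_i^{k,l}\ge-w^kd_{i,j}\ \forall i,j;$$ $$\mathcal C^k(\mathbf x'^k,\mathbf q'^k,\mathbf y'^k,\mathbf t'^k\mid\mathbf p,\mathbf p^s,\mathbf z)\le\sum_j(\phi_j^k+s^kp_j^s)t_j^{k,l}-\mu_1^{k,l}\Big(B^k-\sum_j(\phi_j^k+s^kp_j^s)t_j^{k,l}\Big)+\sum_j\nu_j^{k,l}(t_j^{k,l}-z_j)$$ $$\qquad+\sum_iR_i^k\eta_i^{k,l}-\sum_iR_i^kD^{k,m}\xi_i^{k,l}-\sum_jC_jt_j^{k,l}\sigma_j^{k,l}-\sum_{i,j}a_{i,j}^k\tau_{i,j}^{k,l}R_i^k.$$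
   Context: Model. Finite sets $\mathcal I$ (areas), $\mathcal J$ (edge nodes, $|\mathcal J|=J$), $\mathcal K$ (services). Nonnegative parameters $C_j>0$, $S_j$, $d_{i,j}$, $d_{i,0}$, $D^{k,m}$, $B^k$, $s^k$, $w^k$, $\psi_i^k$, $R_i^k$, $\phi_j^k$, $c_j$, $f_j$, $p_0$; $a_{i,j}^k\in\{0,1\}$; finite price menus $p_j^1,\dots,p_j^V$, $p_j^{s1},\dots,p_j^{sH}$. Follower-$k$ variables: $x_{i,0}^k,x_{i,j}^k,y_0^k,y_j^k,q_i^k\ge0$, $t_j^k\in\{0,1\}$. $\mathcal S^k(\mathbf p,\mathbf p^s,\mathbf z)$ is defined by: $p_0y_0^k+\sum_j p_jy_j^k+\sum_j(\phi_j^k+s^kp_j^s)t_j^k\le B^k$; $t_j^k\le z_j$; $y_j^k\le C_jt_j^k$; $y_0^k\ge\sum_i x_{i,0}^k$; $y_j^k\ge\sum_i x_{i,j}^k$; $x_{i,0}^k+\sum_j x_{i,j}^k+q_i^k=R_i^k$; $x_{i,0}^kd_{i,0}+\sum_jx_{i,j}^kd_{i,j}\le D^{k,m}R_i^k$; $x_{i,j}^k\le a_{i,j}^kR_i^k$. Follower cost $\mathcal C^k=p_0y_0^k+\sum_jp_jy_j^k+\sum_i\psi_i^kq_i^k+\sum_j(\phi_j^k+s^kp_j^s)t_j^k+w^k(\sum_ix_{i,0}^kd_{i,0}+\sum_{i,j}x_{i,j}^kd_{i,j})$. $\mathcal H$: $\sum_ky_j^k\le z_jC_j$, $z_j\in\{0,1\}$,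 $\sum_ks^kt_j^k\le z_jS_j$, each $p_j$, $p^s_j$ chosen from its menu. Platform profit $\mathcal P=\sum_{j,k}(\phi_j^k+s^kp_j^s)t_j^k+\sum_jp_j\sum_ky_j^k-\sum_j(f_jz_j+c_j\sum_ky_j^k/C_j)$. BMIP: maximize $\mathcal P$ over tuples in $\mathcal H$ whose follower-$k$ components minimize $\mathcal C^k$ over $\mathcal S^k(\mathbf p,\mathbf p^s,\mathbf z)$ for every $k$. BMIP1: maximize $\mathcal P(\mathbf p,\mathbf p^s,\mathbf z,\mathbf y',\mathbf t')$ s.t. the tuple with primed follower variables lies in $\mathcal H$, $(\mathbf x'^k,\mathbf q'^k,\mathbf y'^k,\mathbf t'^k)\in\mathcal S^k(\mathbf p,\mathbf p^s,\mathbf z)$, and $\mathcal C^k$ at the primed vector is $\le\min_{\mathcal S^k(\mathbf p,\mathbf p^s,\mathbf z)}\mathcal C^k$ for each $k$. *)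

(* Defs.v *)
From HB Require Import structures.
From mathcomp Require Import all_boot all_order all_algebra.
Set Implicit Arguments. Unset Strict Implicit. Unset Printing Implicit Defensive.
Import Order.TTheory GRing.Theory Num.Theory.
Local Open Scope ring_scope.

(* Areas I, edge nodes J, services K are finite types; R is the real field
   (stated for any realFieldType). Booleans b are embedded in R as b%:R. *)

Record params (I J K : finType) (R : realFieldType) := Params {
  Cap   : J -> R;
  Stor  : J -> R;
  dd    : I -> J -> R;
  dd0   : I -> R;
  Dm    : K -> R;
  Bud   : K -> R;
  sk    : K -> R;
  wk    : K -> R;
  psi   : I -> K -> R;
  Rq    : I -> K -> R;
  phi   : J -> K -> R;
  cc    : J -> R;
  ff    : J -> R;
  p0    : R;
  aa    : I -> J -> K -> bool;
  pmenu : J -> seq R;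
  psmenu : J -> seq R
}.

Section Model.
Variables (I J K : finType) (R : realFieldType) (P : params I J K R).

Definition params_ok : Prop :=
  (forall j, 0 < Cap P j) /\ (forall j, 0 <= Stor P j) /\
  (forall i j, 0 <= dd P i j) /\ (forall i, 0 <= dd0 P i) /\
  (forall k, 0 <= Dm P k) /\ (forall k, 0 <= Bud P k) /\
  (forall k, 0 <= sk P k) /\ (forall k, 0 <= wk P k) /\
  (forall i k, 0 <= psi P i k) /\ (forall i k, 0 <= Rq P i k) /\
  (forall j k, 0 <= phi P j k) /\ (forall j, 0 <= cc P j) /\
  (forall j, 0 <= ff P j) /\ 0 <= p0 P /\
  (forall j, all (fun v => 0 <= v) (pmenu P j) /\
             all (fun v => 0 <= v) (psmenu P j)).

Record fvar := FVar {
  fx0 : I -> R;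
  fx  : I -> J -> R;
  fq  : I -> R;
  fy0 : R;
  fy  : J -> R;
  ft  : J -> bool
}.

Record sol := Sol {
  pp  : J -> R;
  pps : J -> R;
  zz  : J -> bool;
  fol : K -> fvar
}.

Definition fixc (k : K) (ps : J -> R) (j : J) : R := phi P j k + sk P k * ps j.

Definition Sk (k : K) (p ps : J -> R) (z : J -> bool) (v : fvar) : Prop :=
  ((forall i, 0 <= fx0 v i) /\ (forall i j, 0 <= fx v i j) /\
   (forall i, 0 <= fq v i) /\ 0 <= fy0 v /\ (forall j, 0 <= fy v j)) /\
  p0 P * fy0 v + \sum_j p j * fy v j + \sum_j fixc k ps j * (ft v j)%:R
    <= Bud P k /\
  (forall j, ft v j ==> z j) /\
  (forall j, fy v j <= Cap P j * (ft v j)%:R) /\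
  \sum_i fx0 v i <= fy0 v /\
  (forall j, \sum_i fx v i j <= fy v j) /\
  (forall i, fx0 v i + \sum_j fx v i j + fq v i = Rq P i k) /\
  (forall i, fx0 v i * dd0 P i + \sum_j fx v i j * dd P i j
               <= Dm P k * Rq P i k) /\
  (forall i j, fx v i j <= (aa P i j k)%:R * Rq P i k).

Definition Ck (k : K) (p ps : J -> R) (v : fvar) : R :=
  p0 P * fy0 v + \sum_j p j * fy v j + \sum_i psi P i k * fq v i
  + \sum_j fixc k ps j * (ft v j)%:R
  + wk P k * (\sum_i fx0 v i * dd0 P i + \sum_i \sum_j fx v i j * dd P i j).

Definition Hset (s : sol) : Prop :=
  [/\ (forall j, \sum_k fy (fol s k) j <= (zz s j)%:R * Cap P j),
      (forall j, \sum_k sk P k * (ft (fol s k) j)%:R <= (zz s j)%:R * Stor P j),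
      (forall j, pp s j \in pmenu P j) &
      (forall j, pps s j \in psmenu P j)].

Definition profit (s : sol) : R :=
  \sum_j \sum_k fixc k (pps s) j * (ft (fol s k) j)%:R
  + \sum_j pp s j * \sum_k fy (fol s k) j
  - \sum_j (ff P j * (zz s j)%:R + cc P j * (\sum_k fy (fol s k) j) / Cap P j).

Definition bmip_feas (s : sol) : Prop :=
  Hset s /\ forall k,
    Sk k (pp s) (pps s) (zz s) (fol s k) /\
    (forall v, Sk k (pp s) (pps s) (zz s) v ->
       Ck k (pp s) (pps s) (fol s k) <= Ck k (pp s) (pps s) v).

Definition bmip_opt (s : sol) : Prop :=
  bmip_feas s /\ forall s', bmip_feas s' -> profit s' <= profit s.

(* BMIP1: primed vector feasible and C^k(primed) <= min over S^k
   (i.e. <= C^k(v) for every v in S^k) *)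
Definition bmip1_feas (s : sol) : Prop :=
  [/\ Hset s,
      (forall k, Sk k (pp s) (pps s) (zz s) (fol s k)) &
      (forall k v, Sk k (pp s) (pps s) (zz s) v ->
         Ck k (pp s) (pps s) (fol s k) <= Ck k (pp s) (pps s) v)].

Definition bmip1_opt (s : sol) : Prop :=
  bmip1_feas s /\ forall s', bmip1_feas s' -> profit s' <= profit s.

Record dvar := DVar {
  mu1 : R; mu2 : R;
  nu  : J -> R; Gam : J -> R; sig : J -> R;
  xi  : I -> R; tau : I -> J -> R;
  eta : I -> R
}.

Definition dual_ok (k : K) (s : sol) (tl : {ffun J -> bool}) (d : dvar) : Prop :=
  let p := pp s in let ps := pps s in let z := zz s in
  ((0 <= mu1 d) /\ (0 <= mu2 d) /\ (forall j, 0 <= nu d j) /\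
   (forall j, 0 <= Gam d j) /\ (forall j, 0 <= sig d j) /\
   (forall i, 0 <= xi d i) /\ (forall i j, 0 <= tau d i j)) /\
  0 <= p0 P * (1 + mu1 d) - mu2 d /\
  (forall j, 0 <= p j * mu1 d - Gam d j + sig d j + p j) /\
  (forall i, - (wk P k * dd0 P i) <= mu2 d + dd0 P i * xi d i - eta d i) /\
  (forall i, eta d i <= psi P i k) /\
  (forall i j, - (wk P k * dd P i j)
                 <= Gam d j + dd P i j * xi d i + tau d i j - eta d i) /\
  Ck k p ps (fol s k) <=
        \sum_j fixc k ps j * (tl j)%:R
        - mu1 d * (Bud P k - \sum_j fixc k ps j * (tl j)%:R)
        + \sum_j nu d j * ((tl j)%:R - (z j)%:R)
        + \sum_i Rq P i k * eta d i
        - \sum_i Rq P i k * Dm P k * xi d i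
        - \sum_j Cap P j * (tl j)%:R * sig d j
        - \sum_i \sum_j (aa P i j k)%:R * tau d i j * Rq P i k.

(* BMIPe: l ranges over all Q = 2^J binary vectors, indexed by {ffun J -> bool} *)
Definition bmipe_feas (s : sol) (du : K -> {ffun J -> bool} -> dvar) : Prop :=
  [/\ Hset s,
      (forall k, Sk k (pp s) (pps s) (zz s) (fol s k)) &
      (forall k tl, dual_ok k s tl (du k tl))].

Definition bmipe_opt (s : sol) (du : K -> {ffun J -> bool} -> dvar) : Prop :=
  bmipe_feas s du /\
  forall s' du', bmipe_feas s' du' -> profit s' <= profit s.

End Model.

(* Main.v *)
Require Import Defs.
From HB Require Import structures.
From mathcomp Require Import all_boot all_order all_algebra.
From mathcomp Require Import ring lra.
From Stdlib Require Classical_Prop IndefiniteDescription FunctionalExtensionality.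
Require Import Defs.
Set Implicit Arguments. Unset Strict Implicit. Unset Printing Implicit Defensive.
Import Order.TTheory GRing.Theory Num.Theory.
Local Open Scope ring_scope.

Section Core.
Variable R : realFieldType.

Definition form := ((nat -> R) * R)%type.
Definition ev n (g : form) (x : nat -> R) : R := \sum_(i < n) g.1 i * x i + g.2.

Lemma sum_delta (T : finType) (t0 : T) (F : T -> R) :
  \sum_t (if t == t0 then 1 else 0) * F t = F t0.
Proof.
rewrite (bigD1 t0) //= eqxx mul1r big1 ?addr0 // => t /negbTE ->; by rewrite mul0r.
Qed.

Lemma exists_max (T : finType) (P : pred T) (f : T -> R) :
  (exists t, P t) -> exists2 t, P t & forall t', P t' -> f t' <= f t.
Proof.
move=> [t0 Pt0]; case: (arg_maxP f Pt0) => t Pt Ht; by exists t.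
Qed.

Lemma fm_choose (T : finType) (r c : T -> R) :
  (forall z, c z = 0 -> 0 <= r z) ->
  (forall p q, 0 < c p -> c q < 0 -> 0 <= - c q * r p + c p * r q) ->
  exists tau, forall t, 0 <= r t + c t * tau.
Proof.
move=> Hz Hpq.
pose L t := - r t / c t.
have keyP : forall t tau, 0 < c t -> L t <= tau -> 0 <= r t + c t * tau.
  move=> t tau ct; rewrite /L ler_pdivrMr // => h; nra.
have keyN : forall t tau, c t < 0 -> tau <= L t -> 0 <= r t + c t * tau.
  move=> t tau ct; rewrite /L ler_ndivlMr // => h; nra.
have keyPN : forall p q, 0 < c p -> c q < 0 -> L p <= L q.
  move=> p q cp cq; rewrite /L ler_pdivrMr // mulrAC ler_ndivlMr //.
  have := Hpq p q cp cq; nra.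
case: (boolP [exists t, 0 < c t]) => [/existsP hP|].
  have [p Pp Hp] := exists_max L hP.
  exists (L p) => t; case: (ltrgtP (c t) 0) => ct.
  - by apply: keyN => //; apply: keyPN.
  - by apply: keyP => //; apply: Hp.
  - by rewrite ct mul0r addr0; apply: Hz.
move=> /existsPn hP.
case: (boolP [exists t, c t < 0]) => [/existsP hN|].
  have [q Nq Hq] := exists_max (fun t => - L t) hN.
  exists (L q) => t; case: (ltrgtP (c t) 0) => ct.
  - by apply: keyN => //; rewrite -lerN2; apply: Hq.
  - by move: (hP t); rewrite ct.
  - by rewrite ct mul0r addr0; apply: Hz.
move=> /existsPn hN; exists 0 => t; case: (ltrgtP (c t) 0) => ct.
- by move: (hN t); rewrite ct.
- by move: (hP t); rewrite ct.
- by rewrite ct mul0r addr0; apply: Hz.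
Qed.

Section FM.
Variables (T : finType) (c : T -> R).
Definition cond p q := (0 < c p) && (c q < 0).
Definition alp p q := if cond p q then - c q else 0.
Definition bet p q := if cond p q then c p else 0.
Definition del z := if c z == 0 then 1 else (0:R).
Definition comb (u : T -> R) (k : T + T * T) : R :=
  match k with inl z => del z * u z
  | inr pq => alp pq.1 pq.2 * u pq.1 + bet pq.1 pq.2 * u pq.2 end.

Lemma alp_ge0 p q : 0 <= alp p q.
Proof. rewrite /alp /cond; case: ifP => // /andP[_ h]; rewrite oppr_ge0 ltW //. Qed.
Lemma bet_ge0 p q : 0 <= bet p q.
Proof. rewrite /bet /cond; case: ifP => // /andP[h _]; rewrite ltW //. Qed.
Lemma del_ge0 z : 0 <= del z.
Proof. rewrite /del; case: ifP => //. Qed.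

Lemma comb_c k : comb c k = 0.
Proof.
case: k => [z|[p q]] /=; rewrite /del /alp /bet.
  by case: eqP => [->|]; rewrite ?mulr0 ?mul0r.
by case: ifP => _; ring.
Qed.

Definition gcomb (g : T -> form) (k : T + T * T) : form :=
  (fun i => comb (fun t => (g t).1 i) k, comb (fun t => (g t).2) k).

Lemma ev_gcomb (g : T -> form) m x k :
  ev m (gcomb g k) x = comb (fun t => ev m (g t) x) k.
Proof.
rewrite /ev /gcomb; case: k => [z|[p q]] /=.
  by rewrite mulrDr big_distrr /=; congr (_ + _); apply: eq_bigr => i _; rewrite mulrA.
rewrite !mulrDr !big_distrr /= addrACA -big_split /=; congr (_ + _).
by apply: eq_bigr => i _; rewrite mulrDl !mulrA.
Qed.

Definition lift (lam' : T + T * T -> R) (t : T) : R :=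
  lam' (inl t) * del t + \sum_q lam' (inr (t, q)) * alp t q
  + \sum_p lam' (inr (p, t)) * bet p t.

Lemma lift_ge0 lam' : (forall k, 0 <= lam' k) -> forall t, 0 <= lift lam' t.
Proof.
move=> h t; rewrite /lift; apply: addr_ge0; first apply: addr_ge0.
- by apply: mulr_ge0 => //; apply: del_ge0.
- by apply: sumr_ge0 => q _; apply: mulr_ge0 => //; apply: alp_ge0.
- by apply: sumr_ge0 => q _; apply: mulr_ge0 => //; apply: bet_ge0.
Qed.

Lemma lift_sum lam' (u : T -> R) :
  \sum_t lift lam' t * u t = \sum_k lam' k * comb u k.
Proof.
rewrite big_sumType /=.
rewrite [X in _ + X](_ : _ = \sum_p \sum_q lam' (inr (p, q)) * (alp p q * u p + bet p q * u q)); last first.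
  by rewrite pair_bigA; apply: eq_bigr => -[p q].
rewrite /lift.
under eq_bigr => t _ do rewrite !mulrDl !big_distrl /=.
rewrite !big_split /=; rewrite -addrA; congr (_ + _).
  by apply: eq_bigr => t _; rewrite mulrA.
rewrite (exchange_big _ _ _ _ _ (fun t p => lam' (inr (p, t)) * bet p t * u t)) /=.
rewrite -big_split /=; apply: eq_bigr => p _.
rewrite -big_split /=; apply: eq_bigr => q _.
by rewrite mulrDr !mulrA.
Qed.
End FM.

Lemma core n (T : finType) (g : T -> form) :
  (forall x, exists t, ev n (g t) x < 0) ->
  exists lam : T -> R, (forall t, 0 <= lam t) /\
    (forall i, (i < n)%N -> \sum_t lam t * (g t).1 i = 0) /\
    \sum_t lam t * (g t).2 < 0.
Proof.
elim: n T g => [|n IH] T g H.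
  have [t0 ht0] := H (fun _ => 0).
  exists (fun t => if t == t0 then 1 else 0); split; first by move=> t; case: ifP.
  split => //; rewrite sum_delta; move: ht0; by rewrite /ev big_ord0 add0r.
pose c t := (g t).1 n.
have H' : forall x, exists k, ev n (gcomb c g k) x < 0.
  move=> x; case: (boolP [exists k, ev n (gcomb c g k) x < 0]) => [/existsP//|/existsPn hk].
  have hk' : forall k, 0 <= comb c (fun t => ev n (g t) x) k.
    by move=> k; rewrite -ev_gcomb leNgt; apply: hk.
  have [tau Htau] : exists tau, forall t, 0 <= ev n (g t) x + c t * tau.
    apply: fm_choose.
    - move=> z cz; have := hk' (inl z); rewrite /= /del cz eqxx mul1r //.
    - move=> p q cp cq; have := hk' (inr (p, q)); rewrite /= /alp /bet /cond cp cq //.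
  pose x' i := if i == n then tau else x i.
  have [t ht] := H x'.
  have : 0 <= ev n.+1 (g t) x'.
    rewrite /ev big_ord_recr /= /x' eqxx -addrA (addrC (_ * tau)) addrA.
    have -> : \sum_(i < n) (g t).1 i * (if nat_of_ord (widen_ord (leqnSn n) i) == n then tau else x i)
      = \sum_(i < n) (g t).1 i * x i.
      by apply: eq_bigr => i _ /=; rewrite (ltn_eqF (ltn_ord i)).
    exact: Htau.
  by rewrite leNgt ht.
have [lam' [h0 [h1 h2]]] := IH _ _ H'.
exists (lift c lam'); split; first exact: lift_ge0.
split.
  move=> i; rewrite ltnS leq_eqVlt => /orP [/eqP ->|hi].
    rewrite (lift_sum c lam' c) big1 // => k _; by rewrite comb_c mulr0.
  by rewrite (lift_sum c lam' (fun t => (g t).1 i)); apply: h1.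
by rewrite (lift_sum c lam' (fun t => (g t).2)).
Qed.

Definition vform (V : finType) := ((V -> R) * R)%type.
Definition evV (V : finType) (g : vform V) (x : V -> R) := \sum_v g.1 v * x v + g.2.

Lemma coreV (V T : finType) (g : T -> vform V) :
  (forall x, exists t, evV (g t) x < 0) ->
  exists lam : T -> R, (forall t, 0 <= lam t) /\
    (forall v, \sum_t lam t * (g t).1 v = 0) /\
    \sum_t lam t * (g t).2 < 0.
Proof.
move=> H.
pose gn t : form := (fun i => if (insub i : option 'I_#|V|) is Some o then (g t).1 (enum_val o) else 0, (g t).2).
have Hn : forall y, exists t, ev #|V| (gn t) y < 0.
  move=> y; have [t ht] := H (fun v => y (enum_rank v)); exists t.
  rewrite /ev /gn /=; move: ht; rewrite /evV.
  rewrite (reindex (@enum_val V predT)) /=; last first.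
    by exists enum_rank => x _; rewrite ?enum_valK ?enum_rankK.
  congr (_ + _ < 0); apply: eq_bigr => i _; by rewrite valK enum_valK.
have [lam [h0 [h1 h2]]] := core Hn.
exists lam; split => //; split => // v.
have := h1 (enum_rank v) (ltn_ord _); rewrite /gn /= valK enum_rankK //.
Qed.

Lemma evV_scale (V : finType) (g : vform V) k x :
  evV g (fun v => k * x v) = k * (\sum_v g.1 v * x v) + g.2.
Proof. rewrite /evV big_distrr; congr (_ + _); apply: eq_bigr => v _ /=. ring. Qed.

Lemma evV_add (V : finType) (g : vform V) x0 s x :
  evV g (fun v => x0 v + s * x v) = evV g x0 + s * (\sum_v g.1 v * x v).
Proof.
rewrite /evV big_distrr -addrA (addrC g.2) addrA -big_split /=; congr (_ + _).
apply: eq_bigr => v _ /=; ring.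
Qed.

Lemma affine_farkas (V T : finType) (g : T -> vform V) (c : V -> R) (gam : R) :
  (exists2 l1 : T -> R, (forall t, 0 <= l1 t) & forall v, c v = \sum_t l1 t * (g t).1 v) ->
  (forall x, (forall t, 0 <= evV (g t) x) -> 0 <= evV (c, gam) x) ->
  exists l : T -> R, (forall t, 0 <= l t) /\ (forall v, c v = \sum_t l t * (g t).1 v) /\
     \sum_t l t * (g t).2 <= gam.
Proof.
move=> [l1 l1ge0 l1c] Hfe.
case: (Classical_Prop.classic (exists x0, forall t, 0 <= evV (g t) x0)) => [[x0 hx0]|nofeas].
  (* homogenization *)
  pose gh (k : ((T + 'I_1) + 'I_1)%type) : vform (V + 'I_1)%type :=
    match k with
    | inl (inl t) => (fun w => match w with inl v => (g t).1 v | inr _ => (g t).2 end, 0)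
    | inl (inr _) => (fun w => match w with inl _ => 0 | inr _ => 1 end, 0)
    | inr _ => (fun w => match w with inl v => - c v | inr _ => - gam end, -1)
    end.
  have Hinf : forall y, exists k, evV (gh k) y < 0.
    move=> y; case: (boolP [exists k, evV (gh k) y < 0]) => [/existsP //|/existsPn hk].
    exfalso.
    have hk' : forall k, 0 <= evV (gh k) y by move=> k; rewrite leNgt; apply: hk.
    pose x v := y (inl v); pose tau := y (inr ord0).
    have eG : forall t, evV (gh (inl (inl t))) y = \sum_v (g t).1 v * x v + (g t).2 * tau.
      by move=> t; rewrite /evV big_sumType big_ord1 /= addr0.
    have eT : evV (gh (inl (inr ord0))) y = tau.
      rewrite /evV big_sumType big_ord1 /= addr0 mul1r big1 ?add0r // => v _; by rewrite mul0r.
    have eH : evV (gh (inr ord0)) y = - (\sum_v c v * x v + gam * tau) - 1.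
      rewrite /evV big_sumType big_ord1 /=.
      rewrite [X in X + _ + _](_ : _ = - \sum_v c v * x v); first by rewrite /= /x /tau; ring.
      by rewrite -sumrN; apply: eq_bigr => v _; rewrite mulNr.
    have htau : 0 <= tau by rewrite -eT.
    have hH := hk' (inr ord0); rewrite eH in hH.
    case: (ltrgtP tau 0) => ct; first by move: htau; rewrite leNgt ct.
      have hx' : forall t, 0 <= evV (g t) (fun v => tau^-1 * x v).
        move=> t; rewrite evV_scale; have := hk' (inl (inl t)); rewrite eG => h.
        rewrite (_ : _ + _ = tau^-1 * (\sum_v (g t).1 v * x v + (g t).2 * tau)).
          by apply: mulr_ge0 => //; rewrite invr_ge0 ltW.
        by field; rewrite lt0r_neq0.
      have := Hfe _ hx'; rewrite evV_scale /= => h.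
      have e : \sum_v c v * x v + gam * tau = tau * (tau^-1 * (\sum_v c v * x v) + gam).
        by field; rewrite lt0r_neq0.
      have := mulr_ge0 (ltW ct) h; rewrite -e; lra.
    pose s := evV (c, gam) x0 + 1.
    have hs : 0 < s by have := Hfe _ hx0; rewrite /s; lra.
    have := Hfe (fun v => x0 v + s * x v).
    rewrite evV_add /= => h.
    have : 0 <= evV (c, gam) x0 + s * \sum_v c v * x v.
      apply: h => t; rewrite evV_add; apply: addr_ge0 => //.
      apply: mulr_ge0; first exact: ltW.
      by have := hk' (inl (inl t)); rewrite eG ct mulr0 addr0.
    move: hH; rewrite ct mulr0 addr0 => hH.
    rewrite /s in hs *; nra.
  have [lam [h0 [h1 h2]]] := coreV Hinf.
  pose mu := lam (inr ord0); pose rho := lam (inl (inr ord0)).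
  move: h2; rewrite !big_sumType !big_ord1 /= big1; last by move=> t _; rewrite mulr0.
  rewrite mulr0 !add0r mulrN1 oppr_lt0 => hmu.
  have hsum : forall (F : T -> R), \sum_t lam (inl (inl t)) / mu * F t = mu^-1 * \sum_t lam (inl (inl t)) * F t.
    by move=> F; rewrite big_distrr; apply: eq_bigr => t _ /=; rewrite mulrAC mulrC.
  exists (fun t => lam (inl (inl t)) / mu); split.
    by move=> t; apply: divr_ge0 => //; apply: ltW.
  split.
    move=> v; have := h1 (inl v); rewrite !big_sumType !big_ord1 /= mulr0 addr0 => e.
    rewrite hsum; apply: (mulfI (lt0r_neq0 hmu)); rewrite mulrA divrr ?mul1r ?unitfE ?lt0r_neq0 //.
    move: e; rewrite /mu; lra.
  have := h1 (inr ord0); rewrite !big_sumType !big_ord1 /= mulr1 => e.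
  rewrite hsum; rewrite ler_pdivrMl // mulrC.
  have := h0 (inl (inr ord0)); move: e; rewrite /mu; lra.
have Hinf : forall x, exists t, evV (g t) x < 0.
  move=> x; case: (boolP [exists t, evV (g t) x < 0]) => [/existsP //|/existsPn hk].
  by exfalso; apply: nofeas; exists x => t; rewrite leNgt; apply: hk.
have [lam [h0 [h1 h2]]] := coreV Hinf.
pose B0 := \sum_t lam t * (g t).2; pose d := \sum_t l1 t * (g t).2 - gam.
pose s := `|d| / - B0.
have hs : 0 <= s by apply: divr_ge0; rewrite ?normr_ge0 // oppr_ge0 ltW.
exists (fun t => l1 t + s * lam t); split.
  by move=> t; apply: addr_ge0 => //; apply: mulr_ge0.
have hsum : forall F : T -> R, \sum_t (l1 t + s * lam t) * F t = \sum_t l1 t * F t + s * \sum_t lam t * F t.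
  by move=> F; rewrite big_distrr -big_split; apply: eq_bigr => t _ /=; ring.
split.
  by move=> v; rewrite hsum h1 mulr0 addr0 l1c.
rewrite hsum -/B0 (_ : s * B0 = - `|d|); last first.
  by rewrite /s; field; rewrite ?oppr_eq0 ltr0_neq0.
have := ler_norm d; rewrite /d; lra.
Qed.
End Core.

Section Appl.
Variables (I J K : finType) (R : realFieldType) (P : params I J K R).

Definition Vt := ((((I + (I * J)) + I) + 'I_1) + J)%type.
Definition X0 i : Vt := inl (inl (inl (inl i))).
Definition XX p : Vt := inl (inl (inl (inr p))).
Definition Qv i : Vt := inl (inl (inr i)).
Definition Y0 : Vt := inl (inr ord0).
Definition Yv j : Vt := inr j.

Definition Ot := (((((((('I_1 + J) + J) + 'I_1) + J) + I) + I) + I) + (I * J))%type.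
Definition Ct := (Vt + Ot)%type.

Lemma sumVt (F : Vt -> R) :
  \sum_v F v = \sum_i F (X0 i) + \sum_p F (XX p) + \sum_i F (Qv i) + F Y0 + \sum_j F (Yv j).
Proof. by rewrite !big_sumType big_ord1. Qed.

Lemma sumOt (F : Ot -> R) :
  \sum_o F o =
    F (inl (inl (inl (inl (inl (inl (inl (inl ord0))))))))
  + \sum_j F (inl (inl (inl (inl (inl (inl (inl (inr j))))))))
  + \sum_j F (inl (inl (inl (inl (inl (inl (inr j)))))))
  + F (inl (inl (inl (inl (inl (inr ord0))))))
  + \sum_j F (inl (inl (inl (inl (inr j)))))
  + \sum_i F (inl (inl (inl (inr i))))
  + \sum_i F (inl (inl (inr i)))
  + \sum_i F (inl (inr i))
  + \sum_p F (inr p).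
Proof. by rewrite !big_sumType !big_ord1. Qed.


Lemma S1 (T : finType) (t0 : T) (F G : T -> R) :
  \sum_t (if t == t0 then F t else 0) * G t = F t0 * G t0.
Proof.
rewrite (bigD1 t0) //= eqxx big1 ?addr0 // => u /negbTE ->; by rewrite mul0r.
Qed.
Lemma S2 (T : finType) (t0 : T) (F G : T -> R) :
  \sum_t G t * (if t == t0 then F t else 0) = G t0 * F t0.
Proof. by rewrite (eq_bigr _ (fun u _ => mulrC _ _)) S1 mulrC. Qed.
Lemma S3 (T : finType) (t0 : T) (F G : T -> R) :
  \sum_t G t * (if t0 == t then F t else 0) = G t0 * F t0.
Proof. by rewrite -(S2 t0 F G); apply: eq_bigr => u _; rewrite eq_sym. Qed.
Lemma S4 (T : finType) (t0 : T) (F G : T -> R) :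
  \sum_t (if t0 == t then F t else 0) * G t = F t0 * G t0.
Proof. by rewrite -(S1 t0 F G); apply: eq_bigr => u _; rewrite eq_sym. Qed.
Lemma P1 (i0 : I) (F G : I * J -> R) :
  \sum_q (if q.1 == i0 then F q else 0) * G q = \sum_j F (i0, j) * G (i0, j).
Proof.
rewrite [LHS](_ : _ = \sum_i \sum_j (if i == i0 then F (i, j) else 0) * G (i, j)); last first.
  by rewrite pair_bigA; apply: eq_bigr => -[].
rewrite (bigD1 i0) //= [X in _ + X]big1 ?addr0.
  by apply: eq_bigr => j _; rewrite eqxx.
by move=> i /negbTE hi; apply: big1 => j _; rewrite hi mul0r.
Qed.
Lemma P2 (j0 : J) (F G : I * J -> R) :
  \sum_q (if q.2 == j0 then F q else 0) * G q = \sum_i F (i, j0) * G (i, j0).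
Proof.
rewrite [LHS](_ : _ = \sum_i \sum_j (if j == j0 then F (i, j) else 0) * G (i, j)); last first.
  by rewrite pair_bigA; apply: eq_bigr => -[].
apply: eq_bigr => i _; rewrite (bigD1 j0) //= eqxx big1 ?addr0 //.
by move=> j /negbTE ->; rewrite mul0r.
Qed.
Lemma SN (T : finType) (F G : T -> R) : \sum_u (- F u) * G u = - \sum_u F u * G u.
Proof. by rewrite -sumrN; apply: eq_bigr => u _; rewrite mulNr. Qed.
Lemma M1 (T : finType) (G : T -> R) : \sum_u 1 * G u = \sum_u G u.
Proof. by apply: eq_bigr => u _; rewrite mul1r. Qed.
Lemma MN1 (T : finType) (G : T -> R) : \sum_u (-1) * G u = - \sum_u G u.
Proof. by rewrite -sumrN; apply: eq_bigr => u _; rewrite mulN1r. Qed.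
Lemma Z1 (T : finType) (G : T -> R) : \sum_t 0 * G t = 0.
Proof. by rewrite big1 // => u _; rewrite mul0r. Qed.
Lemma Z2 (T : finType) (G : T -> R) : \sum_t G t * 0 = 0.
Proof. by rewrite big1 // => u _; rewrite mulr0. Qed.

Variables (k : K) (p ps : J -> R) (z t : J -> bool).

Definition acoef (c : Ct) (v : Vt) : R :=
match c with
| inl w => if v == w then 1 else 0
| inr o => match o with
  | inl (inl (inl (inl (inl (inl (inl (inl _))))))) =>
      match v with inl (inr _) => - p0 P | inr j => - p j | _ => 0 end
  | inl (inl (inl (inl (inl (inl (inl (inr _))))))) => 0
  | inl (inl (inl (inl (inl (inl (inr j)))))) =>
      match v with inr j' => if j' == j then -1 else 0 | _ => 0 end
  | inl (inl (inl (inl (inl (inr _))))) =>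
      match v with inl (inr _) => 1 | inl (inl (inl (inl _))) => -1 | _ => 0 end
  | inl (inl (inl (inl (inr j)))) =>
      match v with inr j' => if j' == j then 1 else 0
        | inl (inl (inl (inr q))) => if q.2 == j then -1 else 0 | _ => 0 end
  | inl (inl (inl (inr i))) =>
      match v with inl (inl (inl (inl i'))) => if i' == i then -1 else 0
       | inl (inl (inl (inr q))) => if q.1 == i then -1 else 0
       | inl (inl (inr i')) => if i' == i then -1 else 0 | _ => 0 end
  | inl (inl (inr i)) =>
      match v with inl (inl (inl (inl i'))) => if i' == i then 1 else 0
       | inl (inl (inl (inr q))) => if q.1 == i then 1 else 0
       | inl (inl (inr i')) => if i' == i then 1 else 0 | _ => 0 end
  | inl (inr i) =>
      match v with inl (inl (inl (inl i'))) => if i' == i then - dd0 P i' else 0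
        | inl (inl (inl (inr q))) => if q.1 == i then - dd P q.1 q.2 else 0 | _ => 0 end
  | inr q =>
      match v with inl (inl (inl (inr q'))) => if q' == q then -1 else 0 | _ => 0 end
  end
end.

Definition bconst (c : Ct) : R :=
match c with
| inl w => 0
| inr o => match o with
  | inl (inl (inl (inl (inl (inl (inl (inl _))))))) =>
      Bud P k - \sum_j fixc P k ps j * (t j)%:R
  | inl (inl (inl (inl (inl (inl (inl (inr j))))))) => (z j)%:R - (t j)%:R
  | inl (inl (inl (inl (inl (inl (inr j)))))) => Cap P j * (t j)%:R
  | inl (inl (inl (inl (inl (inr _))))) => 0
  | inl (inl (inl (inl (inr j)))) => 0
  | inl (inl (inl (inr i))) => Rq P i k
  | inl (inl (inr i)) => - Rq P i k
  | inl (inr i) => Dm P k * Rq P i k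
  | inr q => (aa P q.1 q.2 k)%:R * Rq P q.1 k
  end
end.

Definition gf (c : Ct) : vform R Vt := (acoef c, bconst c).

Definition mkv (x : Vt -> R) : fvar I J R :=
  FVar (fun i => x (X0 i)) (fun i j => x (XX (i, j))) (fun i => x (Qv i)) (x Y0)
       (fun j => x (Yv j)) t.

Ltac simpev := rewrite /evV /gf /= sumVt /acoef /bconst /X0 /XX /Qv /Y0 /Yv /=;
  rewrite ?S1 ?S2 ?S3 ?S4 ?P1 ?P2 ?Z1 ?Z2 ?MN1 ?M1 ?SN.

Lemma ev_nn x w : evV (gf (inl w)) x = x w.
Proof. by rewrite /evV /gf /= addr0 S1 mul1r. Qed.


Definition cB : Ct := inr (inl (inl (inl (inl (inl (inl (inl (inl ord0)))))))).
Definition cTZ j : Ct := inr (inl (inl (inl (inl (inl (inl (inl (inr j)))))))).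
Definition cCP j : Ct := inr (inl (inl (inl (inl (inl (inl (inr j))))))).
Definition cL0 : Ct := inr (inl (inl (inl (inl (inl (inr ord0)))))).
Definition cLJ j : Ct := inr (inl (inl (inl (inl (inr j))))).
Definition cEP i : Ct := inr (inl (inl (inl (inr i)))).
Definition cEM i : Ct := inr (inl (inl (inr i))).
Definition cDL i : Ct := inr (inl (inr i)).
Definition cAA q : Ct := inr (inr q).

Lemma ev_B x : evV (gf cB) x =
   Bud P k - (p0 P * x Y0 + \sum_j p j * x (Yv j) + \sum_j fixc P k ps j * (t j)%:R).
Proof. rewrite /cB; simpev; ring. Qed.
Lemma ev_TZ x j : evV (gf (cTZ j)) x = (z j)%:R - (t j)%:R.
Proof. rewrite /cTZ; simpev; ring. Qed.
Lemma ev_CP x j : evV (gf (cCP j)) x = Cap P j * (t j)%:R - x (Yv j).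
Proof. rewrite /cCP; simpev; ring. Qed.
Lemma ev_L0 x : evV (gf cL0) x = x Y0 - \sum_i x (X0 i).
Proof. rewrite /cL0; simpev; ring. Qed.
Lemma ev_LJ x j : evV (gf (cLJ j)) x = x (Yv j) - \sum_i x (XX (i, j)).
Proof. rewrite /cLJ; simpev; ring. Qed.
Lemma ev_EP x i : evV (gf (cEP i)) x = Rq P i k - (x (X0 i) + \sum_j x (XX (i, j)) + x (Qv i)).
Proof. rewrite /cEP; simpev; ring. Qed.
Lemma ev_EM x i : evV (gf (cEM i)) x = (x (X0 i) + \sum_j x (XX (i, j)) + x (Qv i)) - Rq P i k.
Proof. rewrite /cEM; simpev; ring. Qed.
Lemma ev_DL x i : evV (gf (cDL i)) x =
  Dm P k * Rq P i k - (x (X0 i) * dd0 P i + \sum_j x (XX (i, j)) * dd P i j).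
Proof.
rewrite /cDL; simpev.
rewrite (eq_bigr (fun j => x (XX (i, j)) * dd P i j)) /XX; last by move=> j _; rewrite mulrC.
ring.
Qed.
Lemma ev_AA x q : evV (gf (cAA q)) x = (aa P q.1 q.2 k)%:R * Rq P q.1 k - x (XX q).
Proof. rewrite /cAA; simpev; ring. Qed.


Lemma sumCt (F : Ct -> R) : \sum_c F c = \sum_w F (inl w) + F cB + \sum_j F (cTZ j)
  + \sum_j F (cCP j) + F cL0 + \sum_j F (cLJ j) + \sum_i F (cEP i) + \sum_i F (cEM i)
  + \sum_i F (cDL i) + \sum_q F (cAA q).
Proof. rewrite big_sumType sumOt /=; rewrite !addrA //. Qed.

Ltac simpco := rewrite sumCt /cB /cTZ /cCP /cL0 /cLJ /cEP /cEM /cDL /cAA /acoef /X0 /XX /Qv /Y0 /Yv /=;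
  rewrite ?S1 ?S2 ?S3 ?S4 ?P1 ?P2 ?Z1 ?Z2 ?MN1 ?M1 ?SN.

Lemma co_X0 (l : Ct -> R) i : \sum_c l c * acoef c (X0 i) =
  l (inl (X0 i)) - l cL0 - l (cEP i) + l (cEM i) - l (cDL i) * dd0 P i.
Proof. simpco; ring. Qed.
Lemma co_XX (l : Ct -> R) q : \sum_c l c * acoef c (XX q) =
  l (inl (XX q)) - l (cLJ q.2) - l (cEP q.1) + l (cEM q.1) - l (cDL q.1) * dd P q.1 q.2 - l (cAA q).
Proof. simpco; ring. Qed.
Lemma co_Q (l : Ct -> R) i : \sum_c l c * acoef c (Qv i) =
  l (inl (Qv i)) - l (cEP i) + l (cEM i).
Proof. simpco; ring. Qed.
Lemma co_Y0 (l : Ct -> R) : \sum_c l c * acoef c Y0 =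
  l (inl Y0) - l cB * p0 P + l cL0.
Proof. simpco; ring. Qed.
Lemma co_Y (l : Ct -> R) j : \sum_c l c * acoef c (Yv j) =
  l (inl (Yv j)) - l cB * p j - l (cCP j) + l (cLJ j).
Proof. simpco; ring. Qed.

Lemma co_const (l : Ct -> R) : \sum_c l c * bconst c =
  l cB * (Bud P k - \sum_j fixc P k ps j * (t j)%:R)
  + \sum_j l (cTZ j) * ((z j)%:R - (t j)%:R)
  + \sum_j l (cCP j) * (Cap P j * (t j)%:R)
  + \sum_i l (cEP i) * Rq P i k + \sum_i l (cEM i) * (- Rq P i k)
  + \sum_i l (cDL i) * (Dm P k * Rq P i k)
  + \sum_q l (cAA q) * ((aa P q.1 q.2 k)%:R * Rq P q.1 k).
Proof.
rewrite sumCt /cB /cTZ /cCP /cL0 /cLJ /cEP /cEM /cDL /cAA /bconst /=; rewrite ?Z2; ring.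
Qed.

Definition cobj (v : Vt) : R :=
  match v with
  | inl (inl (inl (inl i))) => wk P k * dd0 P i
  | inl (inl (inl (inr q))) => wk P k * dd P q.1 q.2
  | inl (inl (inr i)) => psi P i k
  | inl (inr _) => p0 P
  | inr j => p j
  end.

Lemma sum_cobj x : \sum_v cobj v * x v + \sum_j fixc P k ps j * (t j)%:R = Ck P k p ps (mkv x).
Proof.
rewrite sumVt /Ck /mkv /cobj /X0 /XX /Qv /Y0 /Yv /=.
have e1 : \sum_i wk P k * dd0 P i * x (inl (inl (inl (inl i))))
   = wk P k * \sum_i x (inl (inl (inl (inl i)))) * dd0 P i.
  by rewrite big_distrr; apply: eq_bigr => i _ /=; ring.
have e2 : \sum_(q : I * J) wk P k * dd P q.1 q.2 * x (inl (inl (inl (inr q))))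
   = wk P k * \sum_i \sum_j x (inl (inl (inl (inr (i, j))))) * dd P i j.
  rewrite pair_bigA big_distrr; apply: eq_bigr => -[i j] _ /=; ring.
rewrite e1 e2; ring.
Qed.

Definition vec (v : fvar I J R) : Vt -> R := fun w =>
  match w with
  | inl (inl (inl (inl i))) => fx0 v i
  | inl (inl (inl (inr q))) => fx v q.1 q.2
  | inl (inl (inr i)) => fq v i
  | inl (inr _) => fy0 v
  | inr j => fy v j
  end.


Lemma forms_Sk x : (forall c, 0 <= evV (gf c) x) -> Sk P k p ps z (mkv x).
Proof.
move=> H.
have nn : forall w, 0 <= x w by move=> w; rewrite -ev_nn; apply: H.
rewrite /Sk /mkv /=.
split; first by split; [|split; [|split; [|split]]] => *; apply: nn.
split; first by have := H cB; rewrite ev_B subr_ge0.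
split.
  move=> j; have := H (cTZ j); rewrite ev_TZ subr_ge0.
  by case: (t j); case: (z j); rewrite //= ler10.
split; first by move=> j; have := H (cCP j); rewrite ev_CP subr_ge0.
split; first by have := H cL0; rewrite ev_L0 subr_ge0.
split; first by move=> j; have := H (cLJ j); rewrite ev_LJ subr_ge0.
split.
  move=> i; apply/eqP; rewrite eq_le.
  have := H (cEP i); rewrite ev_EP subr_ge0 => ->.
  by have := H (cEM i); rewrite ev_EM subr_ge0.
split; first by move=> i; have := H (cDL i); rewrite ev_DL subr_ge0.
by move=> i j; have := H (cAA (i, j)); rewrite ev_AA subr_ge0.
Qed.

Lemma Sk_forms v : Sk P k p ps z v -> ft v = t -> forall c, 0 <= evV (gf c) (vec v).
Proof.
move=> [[h0 [h1 [h2 [h3 h4]]]] [hB [hTZ [hCP [hL0 [hLJ [hE [hDL hAA]]]]]]]] et.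
case=> [w|o].
  rewrite ev_nn; case: w => [[[[i|[i j]]|i]|u]|j] /=.
  - exact: h0.
  - exact: h1.
  - exact: h2.
  - exact: h3.
  - exact: h4.
case: o => [[[[[[[[u|j]|j]|u]|j]|i]|i]|i]|q].
- rewrite (ord1 u) ev_B subr_ge0 /vec /=; by rewrite -et.
- rewrite ev_TZ subr_ge0; move: (hTZ j); rewrite et.
  by case: (t j); case: (z j); rewrite //= ler01.
- by rewrite (ev_CP _ j) subr_ge0 /vec /= -et.
- by rewrite (ord1 u) ev_L0 subr_ge0 /vec /=.
- by rewrite (ev_LJ _ j) subr_ge0 /vec /=; apply: hLJ.
- by rewrite (ev_EP _ i) subr_ge0 /vec /= (hE i).
- by rewrite (ev_EM _ i) subr_ge0 /vec /= (hE i).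
- by rewrite (ev_DL _ i) subr_ge0 /vec /=; apply: hDL.
- by rewrite (ev_AA _ q) subr_ge0 /vec /=; case: q => i j; apply: hAA.
Qed.


Lemma weakV (V T : finType) (g : T -> vform R V) (c : V -> R) (l : T -> R) x :
  (forall u, 0 <= l u) -> (forall v, c v = \sum_u l u * (g u).1 v) ->
  (forall u, 0 <= evV (g u) x) -> - \sum_u l u * (g u).2 <= \sum_v c v * x v.
Proof.
move=> l0 hc hx.
have e : \sum_v c v * x v + \sum_u l u * (g u).2 = \sum_u l u * evV (g u) x.
  under eq_bigr => v _ do rewrite (hc v) big_distrl.
  rewrite exchange_big -big_split /=; apply: eq_bigr => u _.
  rewrite /evV mulrDr big_distrr; congr (_ + _); apply: eq_bigr => v _ /=; ring.
have : 0 <= \sum_u l u * evV (g u) x by apply: sumr_ge0 => u _; apply: mulr_ge0.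
rewrite -e; lra.
Qed.

Definition Fc := \sum_j fixc P k ps j * (t j)%:R.

Definition drhs (d : dvar I J R) : R :=
        \sum_j fixc P k ps j * (t j)%:R
        - mu1 d * (Bud P k - \sum_j fixc P k ps j * (t j)%:R)
        + \sum_j nu d j * ((t j)%:R - (z j)%:R)
        + \sum_i Rq P i k * eta d i
        - \sum_i Rq P i k * Dm P k * xi d i
        - \sum_j Cap P j * (t j)%:R * sig d j
        - \sum_i \sum_j (aa P i j k)%:R * tau d i j * Rq P i k.

Definition dok (d : dvar I J R) (fol : fvar I J R) : Prop :=
  ((0 <= mu1 d) /\ (0 <= mu2 d) /\ (forall j, 0 <= nu d j) /\
   (forall j, 0 <= Gam d j) /\ (forall j, 0 <= sig d j) /\
   (forall i, 0 <= xi d i) /\ (forall i j, 0 <= tau d i j)) /\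
  0 <= p0 P * (1 + mu1 d) - mu2 d /\
  (forall j, 0 <= p j * mu1 d - Gam d j + sig d j + p j) /\
  (forall i, - (wk P k * dd0 P i) <= mu2 d + dd0 P i * xi d i - eta d i) /\
  (forall i, eta d i <= psi P i k) /\
  (forall i j, - (wk P k * dd P i j)
                 <= Gam d j + dd P i j * xi d i + tau d i j - eta d i) /\
  Ck P k p ps fol <= drhs d.

Lemma drhs_eq (l : Ct -> R) d :
  l cB = mu1 d -> (forall j, l (cTZ j) = nu d j) -> (forall j, l (cCP j) = sig d j) ->
  (forall i, l (cEM i) - l (cEP i) = eta d i) -> (forall i, l (cDL i) = xi d i) ->
  (forall i j, l (cAA (i, j)) = tau d i j) ->
  drhs d = Fc - \sum_c l c * bconst c.
Proof.
move=> hB hTZ hCP hE hDL hAA; rewrite co_const /drhs /Fc.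
have e1 : \sum_j nu d j * ((t j)%:R - (z j)%:R) = - \sum_j l (cTZ j) * ((z j)%:R - (t j)%:R).
  by rewrite -sumrN; apply: eq_bigr => j _; rewrite hTZ; ring.
have e2 : \sum_i Rq P i k * eta d i = - (\sum_i l (cEP i) * Rq P i k + \sum_i l (cEM i) * - Rq P i k).
  by rewrite -big_split -sumrN; apply: eq_bigr => i _; rewrite -hE /=; ring.
have e3 : \sum_i Rq P i k * Dm P k * xi d i = \sum_i l (cDL i) * (Dm P k * Rq P i k).
  by apply: eq_bigr => i _; rewrite hDL; ring.
have e4 : \sum_j Cap P j * (t j)%:R * sig d j = \sum_j l (cCP j) * (Cap P j * (t j)%:R).
  by apply: eq_bigr => j _; rewrite hCP; ring.
have e5 : \sum_i \sum_j (aa P i j k)%:R * tau d i j * Rq P i k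
    = \sum_q l (cAA q) * ((aa P q.1 q.2 k)%:R * Rq P q.1 k).
  by rewrite pair_bigA; apply: eq_bigr => -[i j] _ /=; rewrite hAA; ring.
rewrite e1 e2 e3 e4 e5 hB; ring.
Qed.


Lemma cobj_ge0 : params_ok P -> (forall j, 0 <= p j) -> forall v, 0 <= cobj v.
Proof.
move=> [hC [hS [hd [hd0 [hD [hB [hs [hw [hpsi [hR [hphi [hc [hf [hp0 hm]]]]]]]]]]]]]] hp.
case=> [[[[i|[i j]]|i]|u]|j] /=; rewrite ?mulr_ge0 //.
Qed.

Lemma strong (fol : fvar I J R) : params_ok P -> (forall j, 0 <= p j) ->
  (forall x, Sk P k p ps z (mkv x) -> Ck P k p ps fol <= Ck P k p ps (mkv x)) ->
  exists d, dok d fol.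
Proof.
move=> hok hp hmin.
have H1 : exists2 l1 : Ct -> R, (forall u, 0 <= l1 u) &
    forall v, cobj v = \sum_u l1 u * (gf u).1 v.
  exists (fun c => match c with inl w => cobj w | inr _ => 0 end).
    by case=> // w; apply: cobj_ge0.
  move=> v; rewrite big_sumType /= Z1 addr0 S3 mulr1 //.
have H2 : forall x, (forall u, 0 <= evV (gf u) x) -> 0 <= evV (cobj, Fc - Ck P k p ps fol) x.
  move=> x hx; have := hmin x (forms_Sk hx).
  rewrite /evV /= -(sum_cobj x) /Fc; lra.
have [l [l0 [lc lb]]] := affine_farkas H1 H2.
exists (DVar (l cB) (l cL0) (fun j => l (cTZ j)) (fun j => l (cLJ j)) (fun j => l (cCP j))
         (fun i => l (cDL i)) (fun i j => l (cAA (i, j))) (fun i => l (cEM i) - l (cEP i))).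
rewrite /dok /=.
split; first by split; [|split; [|split; [|split; [|split; [|split]]]]] => *; apply: l0.
split.
  have := lc Y0; rewrite co_Y0 /= => e; have := l0 (inl Y0); lra.
split.
  move=> j; have := lc (Yv j); rewrite co_Y /= => e; have := l0 (inl (Yv j)); lra.
split.
  move=> i; have := lc (X0 i); rewrite co_X0 /= => e; have := l0 (inl (X0 i)); lra.
split.
  move=> i; have := lc (Qv i); rewrite co_Q /= => e; have := l0 (inl (Qv i)); lra.
split.
  move=> i j; have := lc (XX (i, j)); rewrite co_XX /= => e; have := l0 (inl (XX (i, j))); lra.
rewrite (drhs_eq (l := l)) //.
by move: lb; rewrite /gf /=; lra.
Qed.


Lemma weak (fol v : fvar I J R) (d : dvar I J R) :
  dok d fol -> Sk P k p ps z v -> ft v = t -> Ck P k p ps fol <= Ck P k p ps v.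
Proof.
move=> [[m1 [m2 [hnu [hG [hsig [hxi htau]]]]]] [dY0 [dY [dX0 [dQ [dXX hC]]]]]] hS et.
pose l (c : Ct) : R := match c with
  | inl w => match w with
    | inl (inl (inl (inl i))) => mu2 d + dd0 P i * xi d i - eta d i + wk P k * dd0 P i
    | inl (inl (inl (inr q))) => Gam d q.2 + dd P q.1 q.2 * xi d q.1 + tau d q.1 q.2 - eta d q.1
                                 + wk P k * dd P q.1 q.2
    | inl (inl (inr i)) => psi P i k - eta d i
    | inl (inr _) => p0 P * (1 + mu1 d) - mu2 d
    | inr j => p j * mu1 d - Gam d j + sig d j + p j
    end
  | inr o => match o with
    | inl (inl (inl (inl (inl (inl (inl (inl _))))))) => mu1 d
    | inl (inl (inl (inl (inl (inl (inl (inr j))))))) => nu d j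
    | inl (inl (inl (inl (inl (inl (inr j)))))) => sig d j
    | inl (inl (inl (inl (inl (inr _))))) => mu2 d
    | inl (inl (inl (inl (inr j)))) => Gam d j
    | inl (inl (inl (inr i))) => Num.max (eta d i) 0 - eta d i
    | inl (inl (inr i)) => Num.max (eta d i) 0
    | inl (inr i) => xi d i
    | inr q => tau d q.1 q.2
    end
  end.
have l0 : forall c, 0 <= l c.
{ case=> [[[[[i|[i j]]|i]|u]|j]|[[[[[[[[u|j]|j]|u]|j]|i]|i]|i]|[i j]]] /=.
  all: rewrite ?subr_ge0 ?le_max ?lexx ?orbT //.
  all: try by [have := dX0 i; lra|have := dXX i j; lra|have := dQ i; lra|have := dY0; lra|have := dY j; lra].
  all: try by [apply: hnu|apply: hsig|apply: hG|apply: hxi|apply: htau]. }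
have lc : forall w, cobj w = \sum_c l c * acoef c w.
  case=> [[[[i|[i j]]|i]|u]|j].
  - by rewrite co_X0 /=; ring.
  - by rewrite co_XX /=; ring.
  - by rewrite co_Q /=; ring.
  - by rewrite (ord1 u) co_Y0 /=; ring.
  - by rewrite co_Y /=; ring.
have := weakV (g := gf) l0 lc (Sk_forms hS et).
have e1 : Ck P k p ps v = \sum_w cobj w * vec v w + Fc.
  by rewrite /Fc (sum_cobj (vec v)) /Ck /= -et.
rewrite (drhs_eq (l := l)) //= in hC; last by move=> i; ring.
rewrite e1; move: hC; rewrite /gf /=; lra.
Qed.

End Appl.

Lemma feas_equiv (I J K : finType) (R : realFieldType) (P : params I J K R) :
  params_ok P -> forall s, bmip1_feas P s <-> exists du, bmipe_feas P s du.
Proof.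
move=> hok s; split.
  move=> [hH hS hmin].
  have hp : forall j, 0 <= pp s j.
    case: hH => _ _ hm _ j; have := hm j.
    case: hok => _ [_ [_ [_ [_ [_ [_ [_ [_ [_ [_ [_ [_ [_ hmenu]]]]]]]]]]]]].
    by case: (hmenu j) => /allP h _ /h.
  have Hex : forall k (tl : {ffun J -> bool}), exists d, dual_ok P k s tl d.
    move=> k tl.
    have [d hd] := @strong _ _ _ _ P k (pp s) (pps s) (zz s) tl (fol s k) hok hp
      (fun x hx => hmin k _ hx).
    by exists d; exact: hd.
  exists (fun k tl => proj1_sig (IndefiniteDescription.constructive_indefinite_description _ (Hex k tl))).
  split => // k tl; exact: proj2_sig (IndefiniteDescription.constructive_indefinite_description _ (Hex k tl)).
move=> [du [hH hS hD]]; split => // k v hv.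
pose tl := [ffun j => ft v j].
apply: (@weak _ _ _ _ P k (pp s) (pps s) (zz s) tl (fol s k) v (du k tl)) => //.
  exact: hD.
by apply: FunctionalExtensionality.functional_extensionality => j; rewrite /tl ffunE.
Qed.

Theorem proposition3 (I J K : finType) (R : realFieldType)
  (P : params I J K R) :
  params_ok P ->
  (exists s, bmip_opt P s) ->
  (exists s du, bmip1_opt P s /\ bmipe_opt P s du) /\
  (forall s, bmip1_opt P s <-> exists du, bmipe_opt P s du).
Proof.
move=> hok [s0 hs0].
have E := feas_equiv hok.
have eq1 : forall s, bmip1_opt P s <-> exists du, bmipe_opt P s du.
  move=> s; split.
    move=> [hf hopt]; have [du hdu] := (E s).1 hf.
    exists du; split => // s' du' h'; apply: hopt; apply/(E s').2; by exists du'.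
  move=> [du [hf hopt]]; split; first by apply/(E s).2; exists du.
  by move=> s' /(E s').1 [du' h']; apply: (hopt s' du').
split => //.
have h1 : bmip1_opt P s0.
  case: hs0 => [[hH hk] hopt]; split.
    by split => // k; case: (hk k).
  move=> s' [hH' hS' hm']; apply: hopt; split => // k; split; [exact: hS' | exact: hm'].
have [du hdu] := (eq1 s0).1 h1.
by exists s0, du.
Qed.
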